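(* For every integer $k\ge2$, the price of anarchy of the weighted atomic two-stage facility location game with $k$ facility agents, measured by the weighted participation rate (which equals the utilitarian social welfare of the facility agents, i.e. the sum of their loads), is exactly $2$. That is, for every instance $(H,U,k)$ with $k$ facility agents, every subgame perfect equilibrium $(\mathbf{s},\sigma)$ and every facility placement profile $\mathbf{s}^*$ we have $w(\mathbf{s}^* )\le 2\,w(\mathbf{s})$, and there exist instances with $k$ facility agents having a subgame perfect equilibrium $(\mathbf{s},\sigma)$ and a facility placement profile $\mathbf{s}^*$ with $w(\mathbf{s}^* )=2\,w(\mathbf{s})>0$.
   Context: Atomic two-stage facility location game. An instance is a triple $(H,U,k)$: $H=(V,E,w)$ is a finite directed graph with vertex weights $w:V\to\mathbb{Q}_{>0}$; $F$ is a set of $k$ facility agents; $U:F\to 2^V$ assigns to each facility agent $f$ a set $U(f)\subseteq V$ of feasible locations. The vertices are simultaneously the clients and the possible locations; $w(X)=\sum_{v\in X}w(v)$. A facility placement profile (FPP) is a vector $\mathbf{s}=(s_f)_{f\in F}$ with $s_f\in U(f)$ (several facilities may choose the same vertex); $S$ denotes the set of all FPPs. For a client $v$ let $N(v)=\{v\}\cup\{u:(v,u)\in E\}$ and $N_{\mathbf{s}}(v)=\{f\in F: s_f\in N(v)\}$. A client profile for $\mathbf{s}$ is $\sigma(\mathbf{s})$, assigning to each client $v$ numbers $\sigma(\mathbf{s})_{v,f}\in[0,1]$ ($f\in F$) with $\sigma(\mathbf{s})_{v,f}=0$ for $f\notin N_{\mathbf{s}}(v)$ and $\sum_{f\in N_{\mathbf{s}}(v)}\sigma(\mathbf{s})_{v,f}=1$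 whenever $N_{\mathbf{s}}(v)\neq\varnothing$. A full client profile $\sigma$ specifies a client profile $\sigma(\mathbf{s}')$ for every $\mathbf{s}'\in S$. The load of facility $f$ is $\ell_f(\mathbf{s},\sigma)=\sum_{v\in V}\sigma(\mathbf{s})_{v,f}w(v)$. The cost of client $v$ is $L_v(\mathbf{s},\sigma)=w(v)+\sum_{f\in N_{\mathbf{s}}(v)}\sigma(\mathbf{s})_{v,f}\,\ell_{-v,f}(\mathbf{s},\sigma)$ where $\ell_{-v,f}(\mathbf{s},\sigma)=\sum_{u\neq v}\sigma(\mathbf{s})_{u,f}w(u)$. $\sigma(\mathbf{s})$ is a client equilibrium if no client $v$ can strictly decrease $L_v$ by unilaterally changing her own distribution to another feasible one; $\sigma$ is a full client equilibrium if $\sigma(\mathbf{s}')$ is a client equilibrium for every $\mathbf{s}'\in S$. A pair $(\mathbf{s},\sigma)$ is a subgame perfect equilibrium (SPE) if $\sigma$ is a full client equilibrium and there is no facility $f$ and location $s'_f\in U(f)$ with $\ell_f((s'_f,\mathbf{s}_{-f}),\sigma)>\ell_f(\mathbf{s},\sigma)$. The weighted participation rate of an FPP $\mathbf{s}$ is $w(\mathbf{s})=\sum_{v:\,N_{\mathbf{s}}(v)\neq\varnothing}w(v)$. The price of anarchy is the maximum, over instances admitting an SPE with positive participation rate, of $\max_{\mathbf{s}^*\in S}w(\mathbf{s}^* )$ divided by the minimum of $w(\mathbf{s})$ over SPE $(\mathbf{s},\sigma)$ of that instance. *)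

(* Defs.v *)
From HB Require Import structures.
From mathcomp Require Import all_boot all_order all_algebra.
From mathcomp Require Import reals.
Set Implicit Arguments. Unset Strict Implicit. Unset Printing Implicit Defensive.
Import Order.TTheory GRing.Theory Num.Theory.
Local Open Scope ring_scope.

Section FLG.
Variables (V : finType) (E : rel V) (k : nat).

Definition inN (v u : V) : bool := (u == v) || E v u.

Definition feasible (U : 'I_k -> {set V}) (s : {ffun 'I_k -> V}) : Prop :=
  forall f, s f \in U f.

Definition inNs (s : {ffun 'I_k -> V}) (v : V) (f : 'I_k) : bool := inN v (s f).

Variable R : realType.

Definition valid_dist (s : {ffun 'I_k -> V}) (v : V) (q : 'I_k -> R) : Prop :=
  (forall f, 0 <= q f <= 1) /\
  (forall f, ~~ inNs s v f -> q f = 0) /\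
  ((exists f, inNs s v f) -> \sum_(f < k) q f = 1).

Definition client_profile (s : {ffun 'I_k -> V}) (p : V -> 'I_k -> R) : Prop :=
  forall v, valid_dist s v (p v).

Variable w : V -> rat.

Definition load (p : V -> 'I_k -> R) (f : 'I_k) : R :=
  \sum_(v : V) p v f * ratr (w v).

Definition load_minus (p : V -> 'I_k -> R) (v : V) (f : 'I_k) : R :=
  \sum_(u : V | u != v) p u f * ratr (w u).

Definition client_cost (s : {ffun 'I_k -> V}) (p : V -> 'I_k -> R) (v : V) : R :=
  ratr (w v) + \sum_(f < k | inNs s v f) p v f * load_minus p v f.

Definition dev_client (p : V -> 'I_k -> R) (v : V) (q : 'I_k -> R) : V -> 'I_k -> R :=
  fun u => if u == v then q else p u.

Definition client_eq (s : {ffun 'I_k -> V}) (p : V -> 'I_k -> R) : Prop :=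
  client_profile s p /\
  forall v q, valid_dist s v q ->
    client_cost s p v <= client_cost s (dev_client p v q) v.

Definition full_client_eq (U : 'I_k -> {set V})
  (sigma : {ffun 'I_k -> V} -> V -> 'I_k -> R) : Prop :=
  forall s', feasible U s' -> client_eq s' (sigma s').

Definition dev_fac (s : {ffun 'I_k -> V}) (f : 'I_k) (x : V) : {ffun 'I_k -> V} :=
  [ffun g => if g == f then x else s g].

Definition SPE (U : 'I_k -> {set V}) (s : {ffun 'I_k -> V})
  (sigma : {ffun 'I_k -> V} -> V -> 'I_k -> R) : Prop :=
  feasible U s /\ full_client_eq U sigma /\
  forall f x, x \in U f -> ~ (load (sigma s) f < load (sigma (dev_fac s f x)) f).

End FLG.

Definition participation (V : finType) (E : rel V) (k : nat) (w : V -> rat)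
  (s : {ffun 'I_k -> V}) : rat :=
  \sum_(v : V | [exists f : 'I_k, inN E v (s f)]) w v.

(* Main.v *)
Require Import Defs.
From HB Require Import structures.
From mathcomp Require Import all_boot all_order all_algebra.
From mathcomp Require Import reals.
Import Order.TTheory GRing.Theory Num.Theory.
Local Open Scope ring_scope.
Set Implicit Arguments. Unset Strict Implicit.

Section Upper.
Variables (R : realType) (V : finType) (E : rel V) (k : nat) (w : V -> rat).
Hypothesis wpos : forall v, 0 < w v.

Local Notation cov s v := [exists f : 'I_k, inN E v (s f)].

Lemma W_ge0 v : 0 <= (ratr (w v) : R).
Proof. by rewrite ler0q ltW. Qed.

Lemma sum_load (s : {ffun 'I_k -> V}) (p : V -> 'I_k -> R) :
  client_profile E s p ->
  \sum_(f < k) load w p f = \sum_(v | cov s v) (ratr (w v) : R).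
Proof.
move=> cp; rewrite /load exchange_big /= [RHS]big_mkcond /=.
apply: eq_bigr => v _; rewrite -mulr_suml.
case: (cp v) => [h01 [h0 h1]].
case: ifP => cv.
- rewrite h1 ?mul1r //; by case/existsP: cv => f hf; exists f.
- rewrite big1 ?mul0r // => f _; apply: h0; rewrite /inNs; apply/negP => hf.
  by move/negbT: cv => /existsPn /(_ f); rewrite hf.
Qed.

Lemma dev_bound (s : {ffun 'I_k -> V}) (p' : V -> 'I_k -> R) f x :
  client_profile E (dev_fac s f x) p' ->
  \sum_(v | inN E v x && ~~ cov s v) (ratr (w v) : R) <= load w p' f.
Proof.
move=> cp; rewrite /load [X in _ <= X](bigID (fun v => inN E v x && ~~ cov s v)) /=.
rewrite -[X in X <= _]addr0; apply: lerD.
- rewrite le_eqVlt; apply/orP; left; apply/eqP; apply: eq_bigr => v /andP[hx hc].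
  case: (cp v) => [h01 [h0 h1]].
  have hf : inNs E (dev_fac s f x) v f by rewrite /inNs /dev_fac ffunE eqxx.
  have := h1 (ex_intro _ f hf); rewrite (bigD1 f) //= big1 ?addr0.
    by move=> ->; rewrite mul1r.
  move=> g hg; apply: h0; rewrite /inNs /dev_fac ffunE (negbTE hg).
  apply/negP => hh; case/negP: hc; apply/existsP; by exists g.
- apply: sumr_ge0 => v _; apply: mulr_ge0; last exact: W_ge0.
  by case: (cp v) => [h01 _]; case/andP: (h01 f).
Qed.

Lemma cover_bound (s sstar : {ffun 'I_k -> V}) :
  \sum_(v | cov sstar v) (ratr (w v) : R) <=
  \sum_(v | cov s v) (ratr (w v) : R) +
  \sum_(f < k) \sum_(v | inN E v (sstar f) && ~~ cov s v) (ratr (w v) : R).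
Proof.
rewrite (eq_bigr (fun f => \sum_v (if inN E v (sstar f) && ~~ cov s v then (ratr (w v) : R) else 0)));
  last by move=> f _; rewrite big_mkcond.
rewrite exchange_big /= [\sum_(v | cov sstar v) _]big_mkcond [\sum_(v | cov s v) _]big_mkcond.
rewrite -big_split /=; apply: ler_sum => v _.
case: (boolP (cov s v)) => cs /=.
- rewrite big1; last by move=> f _; rewrite andbF.
  by rewrite addr0; case: ifP => _; rewrite ?lexx ?W_ge0.
- rewrite add0r; case: ifP => cst; last first.
    by apply: sumr_ge0 => f _; case: ifP => _; rewrite ?lexx ?W_ge0.
  case/existsP: cst => f hf; rewrite (bigD1 f) //= hf /=.
  rewrite -[X in X <= _]addr0 lerD2l; apply: sumr_ge0 => g _.
  by case: ifP => _; rewrite ?lexx ?W_ge0.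
Qed.

Lemma upper (U : 'I_k -> {set V})
  (s : {ffun 'I_k -> V}) (sigma : {ffun 'I_k -> V} -> V -> 'I_k -> R)
  (sstar : {ffun 'I_k -> V}) :
  SPE E w U s sigma -> feasible U sstar ->
  participation E w sstar <= 2 * participation E w s.
Proof.
move=> [fs [fce dev]] fst.
rewrite -(ler_rat R) rmorphM /= rmorph_nat /participation !rmorph_sum /=.
apply: le_trans (cover_bound s sstar) _.
have cp := (fce s fs).1.
rewrite -(sum_load cp) mulr_natl mulr2n lerD2l; apply: ler_sum => f _.
have fd : feasible U (dev_fac s f (sstar f)).
  move=> g; rewrite /dev_fac ffunE; case: eqP => [->|_]; [exact: fst | exact: fs].
apply: le_trans (dev_bound (fce _ fd).1) _.
rewrite leNgt; apply/negP => h; exact: dev f (sstar f) (fst f) h.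
Qed.
End Upper.
Definition E0 : rel bool := fun _ _ => false.
Definition w1 : bool -> rat := fun _ => 1.

Lemma noedge_eq (R : realType) k (s : {ffun 'I_k -> bool}) (p : bool -> 'I_k -> R) :
  client_profile E0 s p -> client_eq E0 w1 s p.
Proof.
move=> cp; split=> // v q hq.
have H : forall p' : bool -> 'I_k -> R, (forall u, u != v -> p' u = p u) ->
    client_cost E0 w1 s p' v = ratr (w1 v).
  move=> p' hp'; rewrite /client_cost big1 ?addr0 // => f hf.
  rewrite /load_minus big1 ?mulr0 // => u hu; rewrite hp' //.
  case: (cp u) => [_ [h0 _]]; rewrite h0 ?mul0r //.
  move: hf; rewrite /inNs /inN /E0 !orbF => /eqP ->; by rewrite eq_sym.
rewrite H // H // => u hu; by rewrite /dev_client (negbTE hu).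
Qed.

Section Low.
Variables (R : realType) (k : nat).
Definition sig0 (s' : {ffun 'I_k.+1 -> bool}) (v : bool) (f : 'I_k.+1) : R :=
  if s' ord0 == v then (f == ord0)%:R
  else if [pick g | s' g == v] is Some g then (f == g)%:R else 0.

Lemma sum_delta (g : 'I_k.+1) : \sum_(f < k.+1) ((f == g)%:R : R) = 1.
Proof. by rewrite (bigD1 g) //= eqxx big1 ?addr0 // => f /negbTE ->. Qed.

Lemma sig0_valid s' : client_profile E0 s' (sig0 s').
Proof.
move=> v; rewrite /valid_dist /sig0; split; [|split].
- move=> f; case: ifP => _; [|case: pickP => [g _|_]]; try case: (f == _);
  by rewrite ?lexx ?ler01.
- move=> f; rewrite /inNs /inN /E0 orbF => hf.
  case: ifP => h0; [|case: pickP => [g hg|_] //].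
    by have [e|//] := eqVneq f ord0; rewrite e h0 in hf.
  by have [e|//] := eqVneq f g; rewrite e hg in hf.
- move=> [f hf]; case: (s' ord0 == v); first exact: sum_delta.
  case: pickP => [g _|none]; first exact: sum_delta.
  by move: hf; rewrite /inNs /inN /E0 orbF none.
Qed.
End Low.

Lemma lower (R : realType) (k : nat) :
  let U := fun f : 'I_k.+2 => if f == ord0 then [set: bool] else [set true] in
  let s := [ffun _ : 'I_k.+2 => true] in
  let sstar := [ffun g : 'I_k.+2 => g != ord0] in
  [/\ (forall v, 0 < w1 v), SPE E0 w1 U s (@sig0 R k.+1), feasible U sstar,
      participation E0 w1 sstar = 2 * participation E0 w1 s
    & 0 < participation E0 w1 s].
Proof.
move=> U s sstar.
have ps : participation E0 w1 s = 1.
  rewrite /participation big_mkcond big_bool /=.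
  have -> : [exists f, inN E0 true (s f)] by apply/existsP; exists ord0; rewrite /inN ffunE.
  have -> : [exists f, inN E0 false (s f)] = false.
    by apply/negbTE/existsPn => f; rewrite /inN /E0 ffunE.
  by rewrite addr0.
have pst : participation E0 w1 sstar = 2.
  rewrite /participation big_mkcond big_bool /=.
  have -> : [exists f, inN E0 true (sstar f)].
    by apply/existsP; exists (lift ord0 ord0); rewrite /inN ffunE.
  have -> : [exists f, inN E0 false (sstar f)].
    by apply/existsP; exists ord0; rewrite /inN ffunE.
  by [].
split => //.
- split.
    by move=> f; rewrite /U ffunE; case: ifP => _; rewrite ?in_setT ?set11.
  split.
    by move=> s' _; apply: noedge_eq; apply: sig0_valid.
  move=> f x hx.
  have [->|] := eqVneq (dev_fac s f x) s; first by rewrite ltxx.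
  have [ef|nf] := eqVneq f ord0; last first.
    move: hx; rewrite /U (negbTE nf) in_set1 => /eqP ->.
    by case/eqP; apply/ffunP => g; rewrite /dev_fac !ffunE; case: ifP.
  subst f; case: x hx => _.
    by case/eqP; apply/ffunP => g; rewrite /dev_fac !ffunE; case: ifP.
  move=> _.
  rewrite /load !big_bool /sig0 /= /dev_fac !ffunE /= /w1.
  have r1 : ratr (1:rat) = (1:R) by exact: rmorph1.
  rewrite r1 !mulr1.
  case: pickP => [g|none]; first by rewrite ffunE.
  case: pickP => [g|none2].
    rewrite ffunE [ord0 == g]eq_sym; case: (g == ord0) => //= _.
    by rewrite ?add0r ?addr0 ltxx.
  by rewrite add0r addr0 ltxx.
- by move=> f; rewrite /U ffunE; case: (f == ord0); rewrite /= ?in_setT ?set11.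
- by rewrite pst ps.
- by rewrite ps.
Qed.

Unset Implicit Arguments.

Theorem mainTheorem5 (R : realType) (k : nat) (hk : (2 <= k)%N) :
  (forall (V : finType) (E : rel V) (w : V -> rat) (U : 'I_k -> {set V})
          (s : {ffun 'I_k -> V}) (sigma : {ffun 'I_k -> V} -> V -> 'I_k -> R)
          (sstar : {ffun 'I_k -> V}),
      (forall v, 0 < w v) ->
      SPE E w U s sigma ->
      feasible U sstar ->
      participation E w sstar <= 2 * participation E w s)
  /\
  (exists (V : finType) (E : rel V) (w : V -> rat) (U : 'I_k -> {set V})
          (s : {ffun 'I_k -> V}) (sigma : {ffun 'I_k -> V} -> V -> 'I_k -> R)
          (sstar : {ffun 'I_k -> V}),
      [/\ (forall v, 0 < w v), SPE E w U s sigma, feasible U sstar,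
          participation E w sstar = 2 * participation E w s
        & 0 < participation E w s]).
Proof.
split.
  move=> V E w U s sigma sstar wpos hspe fst.
  Time exact: upper hspe fst.
case: k hk => [|[|k']] // _.
exists bool, E0, w1, (fun f : 'I_k'.+2 => if f == ord0 then [set: bool] else [set true]),
  [ffun _ : 'I_k'.+2 => true], (@sig0 R k'.+1), [ffun g : 'I_k'.+2 => g != ord0].
Time exact: lower.
Qed.
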